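(* Consider the linear content-access game described in the context, with $\tau>0$, $\pi_G\in[0,1]$, $\pi_B=1-\pi_G$, $\lambda_{ps}(G)\ge\lambda_{ps}(B)>0$ and $\lambda_{pu}>0$. Then: (i) if $\frac{\pi_G}{\lambda_{ps}(G)} \geq \frac{\pi_B}{\lambda_{ps}(B)}$, then $\alpha=0$ is a symmetric Wardrop equilibrium; (ii) if $\frac{\pi_G}{\lambda_{ps}(G)} \leq \frac{\pi_B}{\lambda_{ps}(B)}$ and $\frac{\pi_G}{\lambda_{ps}(G)+\lambda_{pu}} \geq \frac{\pi_B}{\lambda_{ps}(B)+\lambda_{pu}}$, then every threshold $\alpha$ with $0\le\alpha\le\beta_{\tau,B}$ is a symmetric Wardrop equilibrium; (iii) if $\frac{\pi_G}{\lambda_{ps}(G)} \leq \frac{\pi_B}{\lambda_{ps}(B)}$ and $\frac{\pi_G}{\lambda_{ps}(G)+\lambda_{pu}} < \frac{\pi_B}{\lambda_{ps}(B)+\lambda_{pu}}$, then the threshold $\alpha=\beta_{\tau,B}$ (i.e. $\alpha$ with $\alpha=\beta_{\tau,B}$ when all others play $\alpha$) is a symmetric Wardrop equilibrium.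
   Context: A content has a type $\theta\in\{G,B\}$ (good/bad) and lifetime $\tau>0$. Users hold beliefs $\pi_G$ that the content is good and $\pi_B=1-\pi_G$ that it is bad. Each (pull) user uses a threshold strategy: access the content once its viewcount reaches a threshold. All users other than a tagged user use a common threshold $\alpha\ge 0$; the tagged user uses $\beta\ge0$ (a single user's deviation does not affect the viewcount). Linear dynamics: for type $\theta$, with push rate $\lambda_{ps}(\theta)>0$ and type-independent pull rate $\lambda_{pu}>0$, let $t_\alpha(\theta)=\alpha/\lambda_{ps}(\theta)$ and $X(t,\theta)=\lambda_{ps}(\theta)\,t+\lambda_{pu}\,(t-t_\alpha(\theta))^+$ for $t\ge0$. For $\beta\ge0$, $t_\beta(\theta)=\min\{t\ge 0: X(t,\theta)=\beta\}$. Let $\beta_{\tau,B}=X(\tau,B)$ (the value with $t_{\beta_{\tau,B}}(B)=\tau$; it depends on $\alpha$). The tagged user's utility is $U(\alpha,\beta)=\pi_G(\tau-t_\beta(G))-\pi_B(\tau-t_\beta(B))$ for $0\le\beta\le\beta_{\tau,B}$; a best response to $\alpha$ is a maximizer of $U(\alpha,\cdot)$ over $[0,\beta_{\tau,B}]$. A threshold $\alpha$ with $0\le\alpha\le\beta_{\tau,B}$ is a symmetric Wardrop equilibrium if $\beta=\alpha$ is a best response to $\alpha$. *)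

(* Defs.v *)
From Stdlib Require Import Reals Lra ClassicalEpsilon.
Open Scope R_scope.

Inductive ctype := G | B.

(* Viewcount of content of type th at time t when all other users use
   threshold alpha:  X(t,th) = lps(th) t + lpu (t - t_alpha(th))^+ . *)
Definition t_alpha (lps : ctype -> R) (alpha : R) (th : ctype) : R :=
  alpha / lps th.

Definition X (lps : ctype -> R) (lpu alpha : R) (th : ctype) (t : R) : R :=
  lps th * t + lpu * Rmax (t - t_alpha lps alpha th) 0.

Definition is_first_hit (lps : ctype -> R) (lpu alpha : R) (th : ctype)
  (beta t : R) : Prop :=
  0 <= t /\ X lps lpu alpha th t = beta /\
  (forall s, 0 <= s -> X lps lpu alpha th s = beta -> t <= s).

(* t_beta(th) = min { t >= 0 : X(t,th) = beta } (chosen by classical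
   description; the minimum exists for beta >= 0 under the standing
   assumptions). *)
Definition t_beta (lps : ctype -> R) (lpu alpha : R) (th : ctype) (beta : R) : R :=
  epsilon (inhabits 0) (is_first_hit lps lpu alpha th beta).

Definition beta_tauB (lps : ctype -> R) (lpu tau alpha : R) : R :=
  X lps lpu alpha B tau.

Definition U (piG : R) (lps : ctype -> R) (lpu tau alpha beta : R) : R :=
  piG * (tau - t_beta lps lpu alpha G beta)
  - (1 - piG) * (tau - t_beta lps lpu alpha B beta).

Definition best_response (piG : R) (lps : ctype -> R) (lpu tau alpha beta : R)
  : Prop :=
  0 <= beta <= beta_tauB lps lpu tau alpha /\
  forall b, 0 <= b <= beta_tauB lps lpu tau alpha ->
    U piG lps lpu tau alpha b <= U piG lps lpu tau alpha beta.

Definition symmetric_wardrop (piG : R) (lps : ctype -> R) (lpu tau alpha : R)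
  : Prop :=
  0 <= alpha <= beta_tauB lps lpu tau alpha /\
  best_response piG lps lpu tau alpha alpha.

(* Main.v *)
Require Import Defs.
From Stdlib Require Import Reals Lra ClassicalEpsilon.
Open Scope R_scope.

Definition tf (lpu l a b : R) : R :=
  if Rle_dec b a then b / l else a / l + (b - a) / (l + lpu).

Lemma X_mono lps lpu alpha th s t :
  0 < lps th -> 0 < lpu -> s < t -> X lps lpu alpha th s < X lps lpu alpha th t.
Proof.
  intros Hl Hp Hst. unfold X.
  assert (Rmax (s - t_alpha lps alpha th) 0 <= Rmax (t - t_alpha lps alpha th) 0).
  { unfold Rmax; destruct Rle_dec; destruct Rle_dec; lra. }
  nra.
Qed.

Lemma X_nonneg lps lpu alpha th t :
  0 <= lps th -> 0 <= lpu -> 0 <= t -> 0 <= X lps lpu alpha th t.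
Proof.
  intros. unfold X. assert (0 <= Rmax (t - t_alpha lps alpha th) 0) by apply Rmax_r.
  nra.
Qed.

Lemma tb_eq lps lpu alpha th beta :
  0 < lps th -> 0 < lpu -> 0 <= alpha -> 0 <= beta ->
  t_beta lps lpu alpha th beta = tf lpu (lps th) alpha beta.
Proof.
  intros Hl Hp Ha Hb.
  assert (Hil : 0 < / lps th) by (apply Rinv_0_lt_compat; lra).
  assert (Hil2 : 0 < / (lps th + lpu)) by (apply Rinv_0_lt_compat; lra).
  assert (HX : X lps lpu alpha th (tf lpu (lps th) alpha beta) = beta).
  { unfold X, t_alpha, tf. destruct (Rle_dec beta alpha).
    - assert (beta / lps th - alpha / lps th = (beta - alpha) * / lps th) by (field; lra).
      assert (Rmax (beta / lps th - alpha / lps th) 0 = 0).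
      { unfold Rmax; destruct Rle_dec; try lra. nra. }
      rewrite H0. field. lra.
    - replace (alpha / lps th + (beta - alpha) / (lps th + lpu) - alpha / lps th)
        with ((beta - alpha) * / (lps th + lpu)) by (field; lra).
      assert (Rmax ((beta - alpha) * / (lps th + lpu)) 0 = (beta - alpha) * / (lps th + lpu)).
      { unfold Rmax; destruct Rle_dec; try lra. nra. }
      rewrite H. field. lra. }
  assert (H : is_first_hit lps lpu alpha th beta (tf lpu (lps th) alpha beta)).
  { split; [|split; [exact HX|]].
    - unfold tf; destruct Rle_dec.
      + unfold Rdiv; nra.
      + unfold Rdiv. assert (0 <= alpha * / lps th) by nra.
        assert (0 <= (beta - alpha) * / (lps th + lpu)) by nra. lra.
    - intros s Hs HXs. apply Rnot_lt_le. intro Hlt.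
      pose proof (X_mono lps lpu alpha th s _ Hl Hp Hlt). lra. }
  pose proof (epsilon_spec (inhabits 0) (is_first_hit lps lpu alpha th beta)
     (ex_intro _ _ H)) as He.
  unfold t_beta. destruct He as [He1 [He2 He3]]. destruct H as [H1 [H2 H3]].
  pose proof (He3 _ H1 H2). pose proof (H3 _ He1 He2). lra.
Qed.

Lemma key pG pB lG lB lpu a b :
  0 < lG -> 0 < lB -> 0 < lpu -> 0 <= a -> 0 <= b ->
  (b < a -> pB / lB - pG / lG >= 0) ->
  (a < b -> pB / (lB + lpu) - pG / (lG + lpu) <= 0) ->
  pB * tf lpu lB a b - pG * tf lpu lG a b <= pB * tf lpu lB a a - pG * tf lpu lG a a.
Proof.
  intros HG HB Hp Ha Hb S1 S2. unfold tf.
  destruct (Rle_dec a a) as [_|n]; [|lra].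
  destruct (Rle_dec b a).
  - destruct (Req_dec b a) as [->|Hne]; [lra|].
    assert (Hs := S1 ltac:(lra)).
    assert (E : pB * (b / lB) - pG * (b / lG) - (pB * (a / lB) - pG * (a / lG))
              = (b - a) * (pB / lB - pG / lG)) by (field; lra).
    set (S := pB / lB - pG / lG) in *. nra.
  - assert (Hs := S2 ltac:(lra)).
    assert (E : pB * (a / lB + (b - a) / (lB + lpu)) - pG * (a / lG + (b - a) / (lG + lpu))
              - (pB * (a / lB) - pG * (a / lG))
              = (b - a) * (pB / (lB + lpu) - pG / (lG + lpu))) by (field; lra).
    set (S := pB / (lB + lpu) - pG / (lG + lpu)) in *. nra.
Qed.

Lemma div_ge a b x y : 0 < x -> 0 < y -> a / x >= b / y -> a * y >= b * x.
Proof.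
  intros Hx Hy H.
  assert (E : a / x - b / y = (a * y - b * x) * / (x * y)) by (field; lra).
  assert (0 < / (x * y)) by (apply Rinv_0_lt_compat; nra). nra.
Qed.

Lemma ge_div a b x y : 0 < x -> 0 < y -> a * y >= b * x -> a / x >= b / y.
Proof.
  intros Hx Hy H.
  assert (E : a / x - b / y = (a * y - b * x) * / (x * y)) by (field; lra).
  assert (0 < / (x * y)) by (apply Rinv_0_lt_compat; nra). nra.
Qed.

Theorem theorem1 (tau piG lpu : R) (lps : ctype -> R)
  (Htau : 0 < tau) (HpiG : 0 <= piG <= 1)
  (HlB : 0 < lps B) (HlGB : lps B <= lps G) (Hlpu : 0 < lpu) :
  let piB := 1 - piG in
  (* (i) *)
  (piG / lps G >= piB / lps B ->
     symmetric_wardrop piG lps lpu tau 0)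
  /\
  (* (ii) *)
  (piG / lps G <= piB / lps B ->
   piG / (lps G + lpu) >= piB / (lps B + lpu) ->
     forall alpha, 0 <= alpha <= beta_tauB lps lpu tau alpha ->
       symmetric_wardrop piG lps lpu tau alpha)
  /\
  (* (iii) *)
  (piG / lps G <= piB / lps B ->
   piG / (lps G + lpu) < piB / (lps B + lpu) ->
     (exists alpha, alpha = beta_tauB lps lpu tau alpha) /\
     (forall alpha, alpha = beta_tauB lps lpu tau alpha ->
       symmetric_wardrop piG lps lpu tau alpha)).
Proof.
  cbv zeta.
  assert (HlG : 0 < lps G) by lra.
  assert (Hgen : forall alpha, 0 <= alpha ->
    (forall b, 0 <= b <= beta_tauB lps lpu tau alpha -> b < alpha ->
        (1 - piG) / lps B - piG / lps G >= 0) ->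
    (forall b, 0 <= b <= beta_tauB lps lpu tau alpha -> alpha < b ->
        (1 - piG) / (lps B + lpu) - piG / (lps G + lpu) <= 0) ->
    forall b, 0 <= b <= beta_tauB lps lpu tau alpha ->
      U piG lps lpu tau alpha b <= U piG lps lpu tau alpha alpha).
  { intros alpha Ha S1 S2 b Hb. unfold U.
    rewrite (tb_eq lps lpu alpha G b HlG Hlpu Ha ltac:(lra)).
    rewrite (tb_eq lps lpu alpha B b HlB Hlpu Ha ltac:(lra)).
    rewrite (tb_eq lps lpu alpha G alpha HlG Hlpu Ha Ha).
    rewrite (tb_eq lps lpu alpha B alpha HlB Hlpu Ha Ha).
    pose proof (key piG (1 - piG) (lps G) (lps B) lpu alpha b HlG HlB Hlpu Ha
      ltac:(lra) (S1 b Hb) (S2 b Hb)). lra. }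
  split; [|split].
  - intros H.
    assert (Hnn : 0 <= beta_tauB lps lpu tau 0) by (apply X_nonneg; lra).
    split; [lra|]. split; [lra|].
    apply Hgen; [lra| intros; lra |].
    intros b _ _.
    apply div_ge in H; try lra.
    assert (piG >= 1 - piG) by nra.
    assert (piG * (lps B + lpu) >= (1 - piG) * (lps G + lpu)) by nra.
    apply ge_div in H1; lra.
  - intros H1 H2 alpha Ha. split; [exact Ha|]. split; [lra|].
    apply Hgen; [lra| intros; lra | intros; lra].
  - intros H1 H2. split.
    + exists (lps B * tau). unfold beta_tauB, X, t_alpha.
      replace (lps B * tau / lps B) with tau by (field; lra).
      replace (tau - tau) with 0 by ring.
      unfold Rmax; destruct Rle_dec; lra.
    + intros alpha Ha.
      assert (Hnn : 0 <= alpha) by (rewrite Ha; apply X_nonneg; lra).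
      split; [rewrite <- Ha; lra|]. split; [rewrite <- Ha; lra|].
      apply Hgen; [lra| intros; lra |].
      intros b Hb Hlt. rewrite <- Ha in Hb. lra.
Qed.
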